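(* Let $G$ be a connected threshold graph that is not complete. Then $\chi(\mathcal{R}(G))=3$.
   Context: A threshold graph is a graph that can be constructed from a single vertex by repeatedly adding either an isolated vertex or a universal vertex (a vertex adjacent to all existing vertices). For a connected graph $G$, a search tree on $G$ is a rooted tree with vertex set $V(G)$ defined recursively: its root is some vertex $r\in V(G)$, and the children of $r$ are the roots of search trees on the connected components of $G-r$. For a rooted tree $T$ and $w\in V(T)$, $T|w$ denotes the subtree rooted at $w$. Let $T$ be a search tree on $G$, let $v$ be a child of $u$ in $T$, and let $p$ be the parent of $u$ (if it exists). The $uv$-rotation transforms $T$ into the search tree $T'$ in which: $u$ is a child of $v$ and $v$ is a child of $p$ (or $v$ is the root if $u$ was the root); every subtree of $u$ in $T$ other than $T|v$ is a subtree of $u$ in $T'$; and every subtree $S$ of $v$ in $T$ is a subtree of $u$ in $T'$ if $u$ is adjacent in $G$ to some vertex of $S$, and a subtree of $v$ in $T'$ otherwise. The rotation graph $\mathcal{R}(G)$ is the graph whose vertices are the search trees on $G$, two being adjacent iff they differ by one rotation. $\chi$ denotes chromatic number. *)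

(* Defs.v *)
From mathcomp Require Import all_boot.
Set Implicit Arguments. Unset Strict Implicit. Unset Printing Implicit Defensive.

Section Graphs.
Variables (T : finType) (e : rel T).

(** A graph on T is given by a symmetric irreflexive relation e. *)
Definition graph_connected : Prop := forall x y : T, connect e x y.

Definition complete_graph : Prop := forall x y : T, x != y -> e x y.

(** Threshold graph: the vertices can be listed (each exactly once) so that
    every vertex is either isolated from or universal to all vertices listed
    before it -- i.e. G is built from a single vertex by repeatedly adding an
    isolated or a universal vertex. *)
Definition threshold_graph : Prop :=
  exists s : seq T, [/\ uniq s, (forall x, x \in s) &
    forall s1 x s2, s = s1 ++ x :: s2 ->
      (forall y, y \in s1 -> e x y) \/ (forall y, y \in s1 -> ~~ e x y)].

Definition induced (C : {set T}) : rel T :=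
  [rel x y | [&& x \in C, y \in C & e x y]].

Definition is_component (S C : {set T}) : Prop :=
  [/\ C != set0, C \subset S,
      (forall x y, x \in C -> y \in C -> connect (induced C) x y) &
      (forall x y, x \in C -> y \in S -> e x y -> y \in C)].

(** Rooted trees on V(G) are encoded by their parent map p
    (p x = None iff x is the root).
    [st p S r]: the restriction of p to S is a search tree on G[S] rooted
    at r: the children of r are the roots of search trees on the connected
    components of G[S] - r. *)
Inductive st (p : T -> option T) : {set T} -> T -> Prop :=
| StNode (S : {set T}) (r : T) :
    r \in S ->
    (forall C, is_component (S :\ r) C ->
       exists c, [/\ c \in C, p c = Some r & st p C c]) ->
    st p S r.

Definition is_search_tree (p : {ffun T -> option T}) : Prop :=
  exists r, p r = None /\ st p [set: T] r.

(** [desc p w y]: y is a vertex of the subtree T|w (w is an ancestor of y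
    or y = w). *)
Definition desc (p : {ffun T -> option T}) (w y : T) : bool :=
  connect [rel a b | p a == Some b] y w.

Definition rotate (p : {ffun T -> option T}) (u v : T) : {ffun T -> option T} :=
  [ffun x => if x == v then p u
             else if x == u then Some v
             else if p x == Some v then
                    (if [exists y, desc p x y && e u y] then Some u else Some v)
             else p x].

Definition is_rotation (p q : {ffun T -> option T}) : Prop :=
  exists u v, p v = Some u /\ q = rotate p u v.

Definition rot_adj (p q : {ffun T -> option T}) : Prop :=
  p != q /\ (is_rotation p q \/ is_rotation q p).

End Graphs.

Definition colorable (V : Type) (vert : V -> Prop) (adj : V -> V -> Prop)
    (k : nat) : Prop :=
  exists f : V -> 'I_k, forall x y, vert x -> vert y -> adj x y -> f x != f y.

Definition chromatic_number_is (V : Type) (vert : V -> Prop)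
    (adj : V -> V -> Prop) (k : nat) : Prop :=
  colorable vert adj k /\ (forall j, colorable vert adj j -> k <= j).

Definition rotation_graph_chi_is (T : finType) (e : rel T) (k : nat) : Prop :=
  chromatic_number_is (@is_search_tree T e) (@rot_adj T e) k.

(* Main.v *)
Require Import Defs.
From mathcomp Require Import all_boot.
From mathcomp Require Import zify.
From Stdlib Require Import Lia.
Set Implicit Arguments. Unset Strict Implicit. Unset Printing Implicit Defensive.

Section Basic.
Variables (T : finType) (e : rel T).
Hypotheses (esym : symmetric e) (eirr : irreflexive e).

Definition conn (S : {set T}) :=
  forall x y, x \in S -> y \in S -> connect (induced e S) x y.

Lemma conn_step (r : rel T) x y : connect r x y -> x != y -> exists t, r x t.
Proof.
case/connectP=> [[|t ps]] /=; first by move=> _ ->; rewrite eqxx.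
by case/andP=> xt _ _ _; exists t.
Qed.

Lemma induced_sub (A B : {set T}) x y : A \subset B ->
  connect (induced e A) x y -> connect (induced e B) x y.
Proof.
move=> /subsetP AB; apply: connect_sub => a b /=.
case/and3P=> aA bA ab; apply: connect1; by rewrite /induced /= (AB _ aA) (AB _ bA).
Qed.

Lemma stay (B C : {set T}) x y :
  (forall a b, a \in C -> induced e B a b -> b \in C) -> x \in C ->
  connect (induced e B) x y -> y \in C /\ connect (induced e C) x y.
Proof.
move=> cl xC /connectP [ps]; elim: ps x xC => [|t ps IH] x xC /=.
  by move=> _ ->; split => //; exact: connect0.
case/andP=> xt pt ly; have tC := cl _ _ xC xt.
have [yC ct] := IH t tC pt ly; split=> //.
apply: connect_trans (connect1 _) ct.
by move: xt; rewrite /induced /= xC tC => /and3P [_ _ ->].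
Qed.

Lemma induced_sym S : connect_sym (induced e S).
Proof.
apply: sym_connect_sym => x y /=.
by rewrite /induced /= esym; case: (x \in S); case: (y \in S).
Qed.

Definition compset (S : {set T}) (y : T) : {set T} := [set z | connect (induced e S) y z].

Lemma comp_of (S : {set T}) (y : T) : y \in S -> is_component e S (compset S y).
Proof.
move=> yS; split.
- by apply/set0Pn; exists y; rewrite inE connect0.
- apply/subsetP=> z; rewrite inE => yz.
  have [] := @stay S S y z => // a b _ /and3P [_ ? _] //.
- move=> x z; rewrite !inE => yx yz.
  have xz : connect (induced e S) x z.
    by apply: connect_trans yz; rewrite induced_sym.
  have [] := @stay S (compset S y) x z => //; last by rewrite inE.
  move=> a b; rewrite inE => ya ab; rewrite inE.
  exact: connect_trans ya (connect1 ab).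
- move=> x z; rewrite !inE => yx zS xz.
  have [xS _] : x \in S /\ connect (induced e S) y x.
    by apply: (@stay S S y x) yS _ => // a b _ /and3P [].
  apply: connect_trans yx (connect1 _).
  by rewrite /induced /= xS zS xz.
Qed.

Lemma comp_closed (S C : {set T}) a b :
  is_component e S C -> a \in C -> induced e S a b -> b \in C.
Proof. by case=> _ _ _ cl aC /and3P [_ bS ab]; exact: cl aC bS ab. Qed.

Lemma comp_eq (S C1 C2 : {set T}) t :
  is_component e S C1 -> is_component e S C2 -> t \in C1 -> t \in C2 -> C1 = C2.
Proof.
have H : forall D1 D2, is_component e S D1 -> is_component e S D2 ->
    t \in D1 -> t \in D2 -> forall x, x \in D1 -> x \in D2.
  move=> D1 D2 c1 c2 t1 t2 x x1.
  have [sub1 _] : D1 \subset S /\ True by case: c1.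
  have tx : connect (induced e D1) t x by case: c1 => _ _ cn _; exact: cn.
  have [] := @stay S D2 t x _ t2 (induced_sub sub1 tx) => //.
  by move=> a b aD; apply: comp_closed.
move=> c1 c2 t1 t2; apply/setP=> x; apply/idP/idP; first exact: H.
exact: H.
Qed.

Lemma comp_full (S C : {set T}) : conn S -> is_component e S C -> C = S.
Proof.
move=> cS cC; apply/setP=> y; apply/idP/idP.
  by case: cC => _ /subsetP sub _ _; exact: sub.
move=> yS; case: (cC) => /set0Pn [x xC] /subsetP sub _ _.
have [] := @stay S C x y _ xC (cS _ _ (sub _ xC) yS) => //.
by move=> a b aC; apply: comp_closed.
Qed.

Lemma comp_sub (S C : {set T}) : is_component e S C -> C \subset S.
Proof. by case. Qed.

Lemma comp_conn (S C : {set T}) : is_component e S C -> conn C.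
Proof. by case. Qed.

Section Tree.
Variable p : {ffun T -> option T}.

Lemma st_inv (S : {set T}) (r : T) : st e p S r -> r \in S /\ (forall C, is_component e (S :\ r) C ->
       exists c, [/\ c \in C, p c = Some r & st e p C c]).
Proof. by case. Qed.

Lemma desc_refl (w : T) : desc p w w.
Proof. exact: connect0. Qed.

Lemma desc_step (w a b : T) : p a = Some b -> desc p w b -> desc p w a.
Proof. by move=> pa; apply: connect_trans (connect1 _); rewrite /= pa. Qed.

Lemma desc_trans (a b c : T) : desc p a b -> desc p b c -> desc p a c.
Proof. by move=> ab bc; exact: connect_trans bc ab. Qed.

Lemma desc_inv (w y : T) : desc p w y -> y != w -> exists2 b, p y = Some b & desc p w b.
Proof.
case/connectP=> [[|t ps]] /=; first by move=> _ ->; rewrite eqxx.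
case/andP=> /eqP yt pt lt _; exists t => //.
by apply/connectP; exists ps.
Qed.

Lemma st_sub n : forall (S : {set T}) (r : T), #|S| <= n -> st e p S r -> forall y, y \in S ->
  desc p r y /\ (y != r -> exists2 b, p y = Some b & b \in S).
Proof.
elim: n => [|n IH] S r.
  by rewrite leqn0 => /eqP/cards0_eq -> _ y; rewrite inE.
move=> Sn /st_inv [rS Hc] y yS.
case: (eqVneq y r) => [->|yr]; first by split=> //; exact: desc_refl.
have yS' : y \in S :\ r by rewrite !inE yr.
have [c [cC pc stc]] := Hc _ (comp_of yS').
have CS : #|compset (S :\ r) y| <= n.
  have := cardsD1 r S; rewrite rS => Sr.
  have := subset_leq_card (comp_sub (comp_of yS')); lia.
have yC : y \in compset (S :\ r) y by rewrite inE connect0.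
have [dy py] := IH _ _ CS stc y yC.
split; first exact: desc_trans (desc_step pc (desc_refl r)) dy.
move=> _; case: (eqVneq y c) => [->|yc]; first by exists r.
have [b pb bC] := py yc; exists b => //.
by have := subsetP (comp_sub (comp_of yS')) _ bC; rewrite inE => /andP [].
Qed.

Definition good (S : {set T}) (r : T) :=
  [/\ st e p S r, (forall t, p r = Some t -> t \notin S),
      (forall a b, p a = Some b -> b \in S -> a \in S) & conn S].

Lemma good_desc (S : {set T}) (r : T) : good S r -> forall y, desc p r y = (y \in S).
Proof.
case=> stS pr cl _ y; apply/idP/idP; last first.
  by move=> yS; have [] := st_sub (leqnn _) stS yS.
case/connectP=> ps; elim: ps y => [|t ps IH] y /=.
  by move=> _ <-; have [] := st_inv stS.
by case/andP=> /eqP yt pt lt; apply: cl yt (IH _ pt lt).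
Qed.

Lemma good_child (S : {set T}) (r : T) (C : {set T}) (c : T) : good S r -> is_component e (S :\ r) C ->
  c \in C -> p c = Some r -> st e p C c -> good C c.
Proof.
move=> gS cC cC' pc stc; have [stS pr cl cnS] := gS.
have [rS Hc] := st_inv stS.
split=> //.
- move=> t; rewrite pc => -[rt]; subst t; apply/negP => rC.
  by have := subsetP (comp_sub cC) _ rC; rewrite !inE eqxx.
- move=> a b pa bC.
  have bS : b \in S by have := subsetP (comp_sub cC) _ bC; rewrite inE => /andP [].
  have aS := cl _ _ pa bS.
  have ar : a != r.
    apply/eqP=> ar; move: pa; rewrite ar => /pr; rewrite bS //.
  have aS' : a \in S :\ r by rewrite !inE ar.
  have [c' [c'C pc' stc']] := Hc _ (comp_of aS').
  have aC' : a \in compset (S :\ r) a by rewrite inE connect0.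
  have [_ Hp] := st_sub (leqnn _) stc' aC'.
  case: (eqVneq a c') => [ac'|ac'].
    move: pa; rewrite ac' pc' => -[br]; move: bC; rewrite -br => rC.
    by have := subsetP (comp_sub cC) _ rC; rewrite !inE eqxx.
  have [b' pb' b'C] := Hp ac'; move: pb'; rewrite pa => -[bb']; subst b'.
  by rewrite (comp_eq cC (comp_of aS') bC b'C).
- exact: comp_conn cC.
Qed.

Lemma good_all n : forall (S : {set T}) (r : T), #|S| <= n -> good S r -> forall y, y \in S -> good [set z | desc p y z] y.
Proof.
elim: n => [|n IH] S r.
  by rewrite leqn0 => /eqP/cards0_eq -> _ y; rewrite inE.
move=> Sn gS y yS.
have gS' : good [set z | desc p r z] r.
  by have := good_desc gS; move=> H; suff -> : [set z | desc p r z] = S by []; apply/setP=> z; rewrite inE H.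
case: (eqVneq y r) => [->|yr] //.
have [stS _ _ _] := gS; have [rS Hc] := st_inv stS.
have yS' : y \in S :\ r by rewrite !inE yr.
have [c [cC pc stc]] := Hc _ (comp_of yS').
have gC := good_child gS (comp_of yS') cC pc stc.
have CS : #|compset (S :\ r) y| <= n.
  have := cardsD1 r S; rewrite rS => Sr.
  have := subset_leq_card (comp_sub (comp_of yS')); lia.
apply: (IH _ _ CS gC y); by rewrite inE connect0.
Qed.

End Tree.

Definition Tp (p : {ffun T -> option T}) (w : T) : {set T} := [set y | desc p w y].

Lemma search_good p : graph_connected e -> is_search_tree e p -> forall w, good p (Tp p w) w.
Proof.
move=> gc [r [pr st0]] w.
have g0 : good p [set: T] r.
  split=> //; first by move=> t; rewrite pr.
    by move=> *; rewrite in_setT.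
  move=> x y _ _.
  have H : subrel e (connect (induced e [set: T])).
    by move=> a b ab; apply: connect1; rewrite /induced /= !in_setT ab.
  exact: (connect_sub H (gc x y)).
exact: good_all (leqnn _) g0 w (in_setT w).
Qed.

End Basic.

Section TreeFacts.
Variables (T : finType) (e : rel T).
Hypotheses (esym : symmetric e) (eirr : irreflexive e).
Variable p : {ffun T -> option T}.
Hypothesis gp : forall w, good e p (Tp p w) w.

Lemma mem_Tp w y : (y \in Tp p w) = desc p w y.
Proof. by rewrite inE. Qed.

Lemma Tp_self w : w \in Tp p w.
Proof. by rewrite mem_Tp desc_refl. Qed.

Lemma par_notin x t : p x = Some t -> t \notin Tp p x.
Proof. by case: (gp x) => _ H _ _; exact: H. Qed.

Lemma Tp_step w a b : p a = Some b -> b \in Tp p w -> a \in Tp p w.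
Proof. by rewrite !mem_Tp; exact: desc_step. Qed.

Lemma Tp_par w a : a \in Tp p w -> a != w -> exists2 b, p a = Some b & b \in Tp p w.
Proof. by rewrite mem_Tp => H1 H2; have [b ? ?] := desc_inv H1 H2; exists b; rewrite ?mem_Tp. Qed.

Lemma Tp_conn w : conn e (Tp p w).
Proof. by case: (gp w). Qed.

Lemma par_neq x t : p x = Some t -> x != t.
Proof. by move=> pxt; apply/eqP => xt; have := par_notin pxt; rewrite -xt Tp_self. Qed.

Lemma child_of w y : y \in Tp p w -> y != w -> exists2 c, p c = Some w & y \in Tp p c.
Proof.
rewrite mem_Tp => /connectP [ps]; elim: ps y => [|t ps IH] y /=.
  by move=> _ -> ; rewrite eqxx.
case/andP=> /eqP yt pt lt yw.
case: (eqVneq t w) => [tw|tw].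
  by exists y; rewrite -?tw ?Tp_self.
have [c pc tc] := IH t pt lt tw; exists c => //.
exact: Tp_step yt tc.
Qed.

Lemma child_comp w c : p c = Some w -> is_component e (Tp p w :\ w) (Tp p c).
Proof.
move=> pc.
have cw : c != w by exact: par_neq pc.
have cT : c \in Tp p w by apply: Tp_step pc (Tp_self w).
have cT' : c \in Tp p w :\ w by rewrite !inE cw -mem_Tp.
have [stS _ _ _] := gp w; have [_ Hc] := st_inv stS.
have [c' [c'C pc' stc']] := Hc _ (comp_of esym cT').
have gC := good_child esym (gp w) (comp_of esym cT') c'C pc' stc'.
have cC : c \in compset e (Tp p w :\ w) c by rewrite inE connect0.
have cc' : c = c'.
  apply/eqP; apply/negP => /negP ncc.
  have [_ Hp] := st_sub esym (leqnn _) stc' cC.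
  have [b pb bC] := Hp ncc; move: pb; rewrite pc => -[bw]; subst b.
  by have := subsetP (comp_sub (comp_of esym cT')) _ bC; rewrite !inE eqxx.
subst c'.
suff -> : Tp p c = compset e (Tp p w :\ w) c.
  by apply: comp_of esym _ _ cT'.
by apply/setP => y; rewrite mem_Tp (good_desc esym gC) inE.
Qed.

End TreeFacts.

Section Thr.
Variables (T : finType) (e : rel T).
Hypotheses (esym : symmetric e) (eirr : irreflexive e).
Variable s : seq T.
Hypotheses (s_all : forall x, x \in s)
  (s_thr : forall s1 x s2, s = s1 ++ x :: s2 ->
      (forall y, y \in s1 -> e x y) \/ (forall y, y \in s1 -> ~~ e x y)).

Definition idx x := index x s.
Definition Dt x := all (e x) (take (idx x) s).
Definition key x := if Dt x then size s + idx x else size s - idx x.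

Lemma idx_lt x : idx x < size s.
Proof. by rewrite /idx index_mem. Qed.

Lemma idx_inj a b : idx a = idx b -> a = b.
Proof. by move=> H; rewrite -(nth_index a (s_all a)) -(nth_index a (s_all b)) -/(idx a) H. Qed.

Lemma T1 a b : idx a < idx b -> e a b = Dt b.
Proof.
move=> ab.
have sdec : s = take (idx b) s ++ b :: drop (idx b).+1 s.
  by rewrite -{1}(cat_take_drop (idx b) s) (drop_nth b (idx_lt b)) nth_index.
have aS : a \in take (idx b) s by rewrite in_take.
case: (s_thr sdec) => H.
  rewrite esym (H _ aS); symmetry; apply/allP => y; exact: H.
rewrite esym (negbTE (H _ aS)); symmetry; apply/negP => /allP D.
by have := H _ aS; rewrite D.
Qed.

Lemma Dt0 x : ~~ Dt x -> 0 < idx x.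
Proof. by rewrite lt0n; apply: contra => /eqP; rewrite /Dt => ->; rewrite take0. Qed.

Lemma key_inj a b : key a = key b -> a = b.
Proof.
have la := idx_lt a; have lb := idx_lt b.
rewrite /key; case Da: (Dt a); case Db: (Dt b) => H; apply: idx_inj.
- lia.
- have := Dt0 (negbT Db); lia.
- have := Dt0 (negbT Da); lia.
- lia.
Qed.

Lemma idx_cases a b : a != b -> idx a < idx b \/ idx b < idx a.
Proof.
move=> ab; case: (ltngtP (idx a) (idx b)) => H; [by left|by right|].
by move/idx_inj: H => H; rewrite H eqxx in ab.
Qed.

Lemma keyL y v t : ~~ e y v -> ~~ e y t -> e t v -> key y < key v.
Proof.
move=> yv yt tv.
have nyv : y != v by apply/eqP => E; move: yt; rewrite E esym tv.
have nyt : y != t by apply/eqP => E; move: yv; rewrite E tv.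
have nvt : v != t by apply/eqP => E; move: tv; rewrite E eirr.
have lv := idx_lt v; have ly := idx_lt y; have lt := idx_lt t.
case Dy: (Dt y).
  exfalso.
  have [h1|h1] := idx_cases nyv; last by move: yv; rewrite esym (T1 h1) Dy.
  have [h2|h2] := idx_cases nyt; last by move: yt; rewrite esym (T1 h2) Dy.
  have Dv : ~~ Dt v by rewrite -(T1 h1).
  have Dt' : ~~ Dt t by rewrite -(T1 h2).
  have [h3|h3] := idx_cases nvt.
    by move: tv; rewrite esym (T1 h3) (negbTE Dt').
  by move: tv; rewrite (T1 h3) (negbTE Dv).
rewrite /key Dy; case Dv: (Dt v); first by have := Dt0 (negbT Dy); lia.
have [h1|h1] := idx_cases nyv; last by lia.
exfalso.
have [h3|h3] := idx_cases nvt.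
  have Dtt : Dt t by rewrite -(T1 h3) esym.
  have h4 : idx y < idx t by lia.
  by move: yt; rewrite (T1 h4) Dtt.
by move: tv; rewrite (T1 h3) Dv.
Qed.

Lemma keyF1 (X : {set T}) z y : conn e X -> z \in X ->
  (forall w, w \in X -> key w <= key z) -> y \in X -> y != z -> e z y.
Proof.
move=> cX zX zmax yX yz.
have ls := idx_lt.
have [t /and3P [_ tX yt]] := conn_step (cX _ _ yX zX) yz.
have nyt : y != t by apply/eqP => E; move: yt; rewrite E eirr.
have Dz : Dt z.
  apply/negPn/negP => Dz.
  have Hw : exists w, (w \in X) && Dt w.
    have [h|h] := idx_cases nyt.
      by exists t; rewrite tX -(T1 h).
    by exists y; rewrite yX -(T1 h) esym.
  case: Hw => w /andP [wX Dw].
  have := zmax _ wX; rewrite /key Dw (negbTE Dz).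
  have := Dt0 Dz; have := ls z; have := ls w; lia.
have [h|h] := idx_cases yz; first by rewrite esym (T1 h).
exfalso.
case Dy: (Dt y).
  by have := zmax _ yX; rewrite /key Dy Dz; lia.
have [h2|h2] := idx_cases nyt; last by move: yt; rewrite esym (T1 h2) Dy.
have Dtt : Dt t by rewrite -(T1 h2).
by have := zmax _ tX; rewrite /key Dtt Dz; lia.
Qed.

End Thr.

Section Transfer.
Variables (T : finType) (q : {ffun T -> option T}) (rq : T).
Hypotheses (qrq : q rq = None) (qall : forall y, desc q rq y).

Lemma tr_sup (S : {set T}) w : w \in S ->
  (forall a, a \in S -> a != w -> exists2 b, q a = Some b & b \in S) ->
  forall y, y \in S -> desc q w y.
Proof.
move=> wS H y yS; have /connectP [ps pth lst] := qall y.
elim: ps y yS pth lst => [|t ps IH] y yS /=.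
  move=> _ ry; case: (eqVneq y w) => [->|yw]; first exact: desc_refl.
  by have [b qy _] := H _ yS yw; move: qy; rewrite -ry qrq.
case/andP=> /eqP qyt pt lst.
case: (eqVneq y w) => [->|yw]; first exact: desc_refl.
have [b qy bS] := H _ yS yw; move: qy; rewrite qyt => -[tb]; subst b.
exact: desc_step qyt (IH t bS pt lst).
Qed.

Lemma tr_sub (S : {set T}) w : w \in S ->
  (forall a b, q a = Some b -> b \in S -> a \in S) ->
  forall y, desc q w y -> y \in S.
Proof.
move=> wS H y /connectP [ps]; elim: ps y => [|t ps IH] y /=; first by move=> _ <-.
by case/andP=> /eqP qyt pt lst; apply: H qyt (IH t pt lst).
Qed.

End Transfer.

Section Rot.
Variables (T : finType) (e : rel T).
Hypotheses (esym : symmetric e) (eirr : irreflexive e).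
Variables (p : {ffun T -> option T}) (u v : T) (rq : T).
Hypothesis gp : forall w, good e p (Tp p w) w.
Hypothesis pvu : p v = Some u.
Let q := rotate e p u v.
Hypotheses (qrq : q rq = None) (qall : forall y, desc q rq y).

Definition moved a := [exists y, desc p a y && e u y].

Lemma uv : u != v.
Proof. rewrite eq_sym; exact (par_neq gp pvu). Qed.

Lemma qcase a : [\/ a = v /\ q a = p u, a = u /\ q a = Some v,
   [/\ a != v, a != u, p a = Some v & q a = (if moved a then Some u else Some v)] |
   [/\ a != v, a != u, p a != Some v & q a = p a]].
Proof.
rewrite /q /rotate ffunE.
case: (eqVneq a v) => [->|av]; first by constructor 1.
case: (eqVneq a u) => [->|au]; first by constructor 2.
case: (eqVneq (p a) (Some v)) => [pa|pa]; [constructor 3|constructor 4] => //.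
Qed.

Lemma v_in_u : v \in Tp p u.
Proof. exact: Tp_step pvu (Tp_self p u). Qed.

Lemma R1 w : w != u -> w != v -> Tp q w = Tp p w.
Proof.
move=> wu0 wv0; have wu : u != w by rewrite eq_sym.
have wv : v != w by rewrite eq_sym.
apply/setP => y; apply/idP/idP.
  rewrite mem_Tp => /(tr_sub (Tp_self p w)); apply => a b.
  case: (qcase a) => [[-> ->]|[-> ->]|[av au pa ->]|[av au pa ->]].
  - by move=> pub bw; apply: Tp_step pvu (Tp_step pub bw).
  - move=> [<-] vw; have [b' pb' b'w] := Tp_par vw wv.
    by move: pb'; rewrite pvu => -[bu]; subst b'.
  - case: (moved a) => -[<-] bw; first by apply: Tp_step pa (Tp_step pvu bw).
    exact: Tp_step pa bw.
  - by move=> pab bw; apply: Tp_step pab bw.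
move=> yw; rewrite mem_Tp; apply: (tr_sup qrq qall (Tp_self p w)) yw => a aw anw.
case: (qcase a) => [[av ->]|[au ->]|[av au pa ->]|[av au pa ->]].
- subst a; have [b' pb' b'w] := Tp_par aw anw; move: pb'; rewrite pvu => -[bu]; subst b'.
  exact: Tp_par b'w wu.
- subst a; exists v => //; exact: Tp_step pvu aw.
- have [b' pb' b'w] := Tp_par aw anw; move: pb'; rewrite pa => -[bv]; subst b'.
  have [b'' pb'' b''w] := Tp_par b'w wv; move: pb''; rewrite pvu => -[bu]; subst b''.
  by case: (moved a); [exists u | exists v].
- exact: Tp_par aw anw.
Qed.

Lemma R2 : Tp q v = Tp p u.
Proof.
apply/setP => y; apply/idP/idP.
  rewrite mem_Tp => /(tr_sub v_in_u); apply => a b.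
  case: (qcase a) => [[-> _]|[-> _]|[av au pa _]|[av au pa ->]].
  - by move=> *; exact: v_in_u.
  - by move=> *; exact: Tp_self.
  - by move=> *; apply: Tp_step pa v_in_u.
  - by move=> pab bw; apply: Tp_step pab bw.
move=> yw; rewrite mem_Tp; apply: (tr_sup qrq qall v_in_u) yw => a aw anw.
case: (qcase a) => [[av ->]|[au ->]|[av au pa ->]|[av au pa ->]].
- by rewrite av eqxx in anw.
- by exists v => //; exact: v_in_u.
- by case: (moved a); [exists u => //; exact: Tp_self | exists v => //; exact: v_in_u].
- exact: Tp_par aw au.
Qed.

Definition Yset := [set y | desc p u y && (~~ desc p v y ||
   [exists c, [&& p c == Some v, moved c & desc p c y]])].

Lemma v_notin_Y : v \notin Yset.
Proof.
rewrite inE desc_refl /=; apply/negP => /andP [_ /existsP [c /and3P [/eqP pc _ dcv]]].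
by have := par_notin gp pc; rewrite mem_Tp dcv.
Qed.

Lemma u_in_Y : u \in Yset.
Proof. by rewrite inE desc_refl /=; have := par_notin gp pvu; rewrite mem_Tp => ->. Qed.

Lemma Y_sub : Yset \subset Tp p u.
Proof. by apply/subsetP => y; rewrite inE mem_Tp => /andP []. Qed.

Lemma R3 : Tp q u = Yset.
Proof.
apply/setP => y; apply/idP/idP.
  rewrite mem_Tp => /(tr_sub u_in_Y); apply => a b.
  case: (qcase a) => [[-> ->]|[-> _]|[av au pa ->]|[av au pa ->]].
  - move=> pub /(subsetP Y_sub) bu.
    by have := par_notin gp pub; rewrite bu.
  - by move=> *; exact: u_in_Y.
  - case Hm: (moved a) => -[<-] bY; last by move: bY; rewrite (negbTE v_notin_Y).
    have := Tp_step pa v_in_u; rewrite mem_Tp inE => -> /=; apply/orP; right.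
    by apply/existsP; exists a; rewrite pa eqxx Hm desc_refl.
  - move=> pab; rewrite !inE => /andP [dub H]; rewrite (desc_step pab dub) /=.
    case/orP: H => [ndvb|/existsP [c /and3P [pc mc dcb]]].
      apply/orP; left; apply/negP => dva.
      have [b' pb' b'v] := desc_inv dva av; move: pb'; rewrite pab => -[bb']; subst b'.
      by rewrite b'v in ndvb.
    apply/orP; right; apply/existsP; exists c; rewrite pc mc /=.
    exact: desc_step pab dcb.
move=> yY; rewrite mem_Tp; apply: (tr_sup qrq qall u_in_Y) yY => a aY anu.
case: (qcase a) => [[av _]|[au _]|[av au pa ->]|[av au pa ->]].
- by subst a; rewrite (negbTE v_notin_Y) in aY.
- by rewrite au eqxx in anu.
- move: (aY); rewrite inE => /andP [_ /orP [H|/existsP [c /and3P [/eqP pc mc dca]]]].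
    by rewrite (desc_step pa (desc_refl p v)) in H.
  case: (eqVneq a c) => [ac|ac].
    by subst c; rewrite mc; exists u => //; exact: u_in_Y.
  have [b' pb' b'c] := desc_inv dca ac.
  move: pb'; rewrite pa => -[bv]; subst b'.
  by have := par_notin gp pc; rewrite mem_Tp b'c.
- have au' : a \in Tp p u by apply: (subsetP Y_sub).
  have [b pab bu] := Tp_par au' au; exists b => //.
  move: (aY); rewrite !inE => /andP [_ H]; rewrite -mem_Tp bu /=.
  case/orP: H => [ndva|/existsP [c /and3P [/eqP pc mc dca]]].
    by apply/orP; left; apply: contra ndva => H; apply: desc_step pab H.
  apply/orP; right; apply/existsP; exists c; rewrite pc eqxx mc /=.
  have ac : a != c by apply: contra pa => /eqP ->; rewrite pc.
  have [b' pb' b'c] := desc_inv dca ac.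
  by move: pb'; rewrite pab => -[bb']; subst b'.
Qed.

End Rot.

Section Color.
Variables (T : finType) (e : rel T).
Hypotheses (esym : symmetric e) (eirr : irreflexive e).
Variable s : seq T.
Hypotheses (s_all : forall x, x \in s)
  (s_thr : forall s1 x s2, s = s1 ++ x :: s2 ->
      (forall y, y \in s1 -> e x y) \/ (forall y, y \in s1 -> ~~ e x y)).

Definition cnt (A : {set T}) w := #|[set y in A | key e s w < key e s y]|.
Definition Nc (p : {ffun T -> option T}) w := cnt (Tp p w) w.
Definition differ a b := [|| b == a.+1, a == b.+1, (a == 0) && (0 < b) | (b == 0) && (0 < a)].

Lemma cnt_U1 (A : {set T}) a w : a \notin A -> key e s w < key e s a -> cnt (a |: A) w = (cnt A w).+1.
Proof.
move=> aA kwa; rewrite /cnt.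
have -> : [set y in a |: A | key e s w < key e s y] = a |: [set y in A | key e s w < key e s y].
  by apply/setP => y; rewrite !inE; case: (eqVneq y a) => [->|] //=; rewrite kwa.
by rewrite cardsU1 inE (negbTE aA).
Qed.

Lemma cnt0 (A : {set T}) w : (forall y, y \in A -> key e s y <= key e s w) -> cnt A w = 0.
Proof.
move=> H; rewrite /cnt; apply/eqP; rewrite cards_eq0; apply/eqP; apply/setP => y; rewrite !inE.
by apply/negP => /andP [/H]; rewrite leqNgt => /negbTE ->.
Qed.

Lemma cnt_pos (A : {set T}) w y : y \in A -> key e s w < key e s y -> 0 < cnt A w.
Proof. by move=> yA kwy; rewrite /cnt card_gt0; apply/set0Pn; exists y; rewrite !inE yA. Qed.

Lemma cnt_ext (A B : {set T}) w : (forall y, key e s w < key e s y -> (y \in A) = (y \in B)) -> cnt A w = cnt B w.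
Proof.
move=> H; rewrite /cnt; apply: eq_card => y; rewrite !inE.
by case kw: (key e s w < key e s y); rewrite ?andbF // (H _ kw).
Qed.

Lemma key_lt_or a b : a != b -> key e s a < key e s b \/ key e s b < key e s a.
Proof.
move=> ab; case: (ltngtP (key e s a) (key e s b)) => H; [by left|by right|].
by move/(key_inj s_all): H => H; rewrite H eqxx in ab.
Qed.

Variables (p : {ffun T -> option T}) (u v rq : T).
Hypothesis gp : forall w, good e p (Tp p w) w.
Hypothesis pvu : p v = Some u.
Let q := rotate e p u v.
Hypotheses (qrq : q rq = None) (qall : forall y, desc q rq y).

Lemma main_cases : (Nc q u = Nc p u /\ differ (Nc p v) (Nc q v)) \/
                   (Nc q v = Nc p v /\ differ (Nc p u) (Nc q u)).
Proof.
set X := Tp p u; set Tv := Tp p v; set Y := Yset e p u v.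
have cX : conn e X by apply: Tp_conn.
have vX : v \in X := v_in_u pvu.
have compv : is_component e (X :\ u) Tv := child_comp esym gp pvu.
have uTv : u \notin Tv := par_notin gp pvu.
have huv : u != v := uv gp pvu.
have Nqv : Nc q v = cnt X v by rewrite /Nc (R2 pvu qrq qall).
have Nqu : Nc q u = cnt Y u by rewrite /Nc (R3 gp pvu qrq qall).
have Npu : Nc p u = cnt X u by [].
have Npv : Nc p v = cnt Tv v by [].
have YX := subsetP (Y_sub e p u v).
have TvX : forall y, y \in Tv -> y \in X :\ u := subsetP (comp_sub compv).
have kinj := key_inj s_all.
case: (@arg_maxnP T u (fun y => y \in X) (key e s) (Tp_self p u)) => z zX zmax.
case: (eqVneq z u) => [zu|zu].
-
  subst z; left; split.
    rewrite Nqu Npu !cnt0 // => y yY; exact: zmax (YX _ yY).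
  rewrite Nqv Npv.
  have kvu : key e s v < key e s u.
    have kvu' : key e s v <= key e s u := zmax _ vX.
    move: kvu'; rewrite leq_eqVlt => /orP [/eqP E|//].
    by move/kinj: E => E; rewrite E eqxx in huv.
  case: (posnP (cnt Tv v)) => [c0|cpos].
    by rewrite /differ c0 (cnt_pos (Tp_self p u) kvu) /= !orbT.
  suff -> : cnt X v = (cnt Tv v).+1 by rewrite /differ eqxx.
  have [y0 y0Tv ky0] : exists2 y0, y0 \in Tv & key e s v < key e s y0.
    move: cpos; rewrite /cnt card_gt0 => /set0Pn [y0]; rewrite inE => /andP [H1 H2].
    by exists y0.
  have vy0 : v != y0 by apply/eqP => E; rewrite E ltnn in ky0.
  have [t /and3P [_ tTv vt]] := conn_step (@Tp_conn _ _ _ gp v _ _ (Tp_self p v) y0Tv) vy0.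
  rewrite -(cnt_U1 uTv kvu); apply: cnt_ext => y kvy; rewrite in_setU1.
  case: (eqVneq y u) => [->|yu] /=; first by [].
  apply/idP/idP => [yX|]; last by move=> /TvX; rewrite in_setD1 => /andP [].
  apply/negPn/negP => yTv.
  have yXu : y \in X :\ u by rewrite in_setD1 yu yX.
  have nyv : ~~ e y v.
    apply/negP => eyv; apply/negP: yTv; apply/negPn.
    by apply: (comp_closed compv (Tp_self p v)); rewrite /induced /= (TvX _ (Tp_self p v)) yXu esym.
  have nyt : ~~ e y t.
    apply/negP => eyt; apply/negP: yTv; apply/negPn.
    by apply: (comp_closed compv tTv); rewrite /induced /= (TvX _ tTv) yXu esym.
  have := keyL esym eirr s_all s_thr nyv nyt; rewrite esym => /(_ vt).
  by rewrite ltnNge leq_eqVlt kvy orbT.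
have zuniv : forall y, y \in X -> y != z -> e z y.
  by move=> y yX yz; apply: (keyF1 esym eirr s_all s_thr cX zX zmax yX yz).
have TvE : Tv = X :\ u.
  apply/setP => y; apply/idP/idP; first exact: TvX.
  have zTv : z \in Tv.
    case: (eqVneq z v) => [->|zv]; first exact: Tp_self.
    apply: (comp_closed compv (Tp_self p v)).
    by rewrite /induced /= (TvX _ (Tp_self p v)) in_setD1 zu zX /= esym zuniv // eq_sym.
  rewrite in_setD1 => /andP [yu yX].
  case: (eqVneq y z) => [->//|yz].
  apply: (comp_closed compv zTv).
  by rewrite /induced /= (TvX _ zTv) in_setD1 yu yX /= zuniv.
have XE : forall y, (y \in X) = (y == u) || (y \in Tv).
  by move=> y; rewrite TvE in_setD1; case: (eqVneq y u) => [->|] //=; rewrite Tp_self.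
have kuz : key e s u < key e s z.
  have kuz' : key e s u <= key e s z := zmax _ (Tp_self p u).
  move: kuz'; rewrite leq_eqVlt => /orP [/eqP E|//].
  by move/kinj: E => E; rewrite E eqxx in zu.
case: (eqVneq z v) => [zv|zv].
- subst z; right; split.
    rewrite Nqv Npv !cnt0 // => y yTv; apply: zmax.
    by have := TvX _ yTv; rewrite in_setD1 => /andP [].
  case: (posnP (cnt Y u)) => [c0|cpos].
    by rewrite Nqu Npu /differ c0 (cnt_pos vX kuz) /= !orbT.
  rewrite Nqu Npu.
  suff -> : cnt X u = (cnt Y u).+1 by rewrite /differ eqxx orbT.
  have [m mY kum] : exists2 m, m \in Y & key e s u < key e s m.
    move: cpos; rewrite /cnt card_gt0 => /set0Pn [m]; rewrite inE => /andP [H1 H2].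
    by exists m.
  have mu : m != u by apply/eqP => E; rewrite E ltnn in kum.
  have mTv : m \in Tv by rewrite TvE in_setD1 mu (YX _ mY).
  move: (mY); rewrite inE => /andP [_ /orP [|/existsP [c' /and3P [/eqP pc' mc' dc'm]]]].
    by rewrite -mem_Tp mTv.
  case/existsP: (mc') => t /andP [dc't eut].
  rewrite -(cnt_U1 (v_notin_Y u v gp) kuz); apply: cnt_ext => y kuy; rewrite in_setU1.
  case: (eqVneq y v) => [->|yv] /=; first exact: vX.
  apply/idP/idP => [yX|/YX //].
  have yu : y != u by apply/eqP => E; rewrite E ltnn in kuy.
  have yTv : y \in Tv by rewrite TvE in_setD1 yu yX.
  have [c pc yc] := child_of yTv yv.
  case Hmc: (moved e p u c).
    rewrite inE -mem_Tp yX /=; apply/orP; right; apply/existsP; exists c.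
    by rewrite pc eqxx Hmc -mem_Tp yc.
  exfalso.
  have nyu : ~~ e y u.
    rewrite esym; apply/negP => euy; move/negbT: Hmc => /negP; apply.
    by apply/existsP; exists y; rewrite -mem_Tp yc euy.
  have nyt : ~~ e y t.
    apply/negP => eyt; move/negbT: Hmc => /negP; apply.
    apply/existsP; exists t; rewrite eut andbT -mem_Tp.
    apply: (comp_closed (child_comp esym gp pc) yc).
    have tTvv : t \in Tv :\ v.
      have := subsetP (comp_sub (child_comp esym gp pc')) t; rewrite mem_Tp; apply; exact: dc't.
    rewrite /induced /= tTvv eyt !andbT; exact: (subsetP (comp_sub (child_comp esym gp pc)) _ yc).
  have := keyL esym eirr s_all s_thr nyu nyt; rewrite esym => /(_ eut).
  by rewrite ltnNge leq_eqVlt kuy orbT.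
have zTv : z \in Tv by rewrite TvE in_setD1 zu zX.
have [c'' pc'' zc''] := child_of zTv zv.
have mc'' : moved e p u c''.
  apply/existsP; exists z; rewrite -mem_Tp zc'' esym zuniv //; first exact: Tp_self.
  by rewrite eq_sym.
have YE : Y = X :\ v.
  apply/setP => y; rewrite in_setD1; apply/idP/idP.
    move=> yY; rewrite (YX _ yY) andbT; apply/eqP => yv.
    by move: yY; rewrite yv (negbTE (v_notin_Y u v gp)).
  case/andP=> yv yX; case: (eqVneq y u) => [->|yu]; first exact: u_in_Y.
  have yTv : y \in Tv by rewrite TvE in_setD1 yu yX.
  have yc : y \in Tp p c''.
    case: (eqVneq y z) => [->//|yz].
    apply: (comp_closed (child_comp esym gp pc'') zc'').
    have zTvv := subsetP (comp_sub (child_comp esym gp pc'')) _ zc''.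
    by rewrite /induced /= (zuniv _ yX yz) andbT zTvv in_setD1 yv yTv.
  rewrite inE -mem_Tp yX /=; apply/orP; right; apply/existsP; exists c''.
  by rewrite pc'' eqxx mc'' -mem_Tp yc.
case: (key_lt_or huv) => kuv.
- right; split.
    rewrite Nqv Npv; apply: cnt_ext => y kvy; rewrite XE.
    case: (eqVneq y u) => [E|] //=; by rewrite E ltnNge ltnW in kvy.
  rewrite Nqu Npu YE.
  have vXv : v \notin X :\ v by rewrite in_setD1 eqxx.
  have -> : cnt X u = (cnt (X :\ v) u).+1 by rewrite -(cnt_U1 vXv kuv) setD1K.
  by rewrite /differ eqxx orbT.
- left; split.
    rewrite Nqu Npu YE; apply: cnt_ext => y kuy; rewrite in_setD1.
    case: (eqVneq y v) => [E|] //=; by rewrite E ltnNge ltnW in kuy.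
  rewrite Nqv Npv.
  have -> : cnt X v = (cnt Tv v).+1.
    rewrite -(cnt_U1 uTv kuv); congr cnt; by apply/setP => y; rewrite in_setU1 XE.
  by rewrite /differ eqxx.
Qed.
End Color.

Section Final.
Variables (T : finType) (e : rel T).
Hypotheses (esym : symmetric e) (eirr : irreflexive e) (gc : graph_connected e).
Variable s : seq T.
Hypotheses (s_all : forall x, x \in s)
  (s_thr : forall s1 x s2, s = s1 ++ x :: s2 ->
      (forall y, y \in s1 -> e x y) \/ (forall y, y \in s1 -> ~~ e x y)).

Definition hh k := if k == 0 then 0 else if odd k then 1 else 2.

Lemma hh_lt k : hh k < 3.
Proof. by rewrite /hh; case: (k == 0); case: (odd k). Qed.

Lemma differ_hh a b : differ a b -> hh a != hh b.
Proof.
rewrite /differ /hh => /or4P [/eqP->|/eqP->|/andP[/eqP-> b0]|/andP[/eqP-> a0]].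
- by case: a => [|a] //=; case: (odd a).
- by case: b => [|b] //=; case: (odd b).
- by case: b b0 => [|b] //= _; case: (odd b).
- by case: a a0 => [|a] //= _; case: (odd a).
Qed.

Definition Ssum (p : {ffun T -> option T}) := \sum_w hh (Nc e s p w).

Definition fcol (p : {ffun T -> option T}) : 'I_3 := Ordinal (ltn_pmod (Ssum p) (isT : 0 < 3)).

Lemma sum_split (F : T -> nat) (u v : T) : u != v ->
  \sum_w F w = F u + F v + \sum_(w | (w != u) && (w != v)) F w.
Proof.
move=> uv; rewrite (bigD1 u) //= (bigD1 v) /=; last by rewrite eq_sym.
by rewrite addnA; congr (_ + _); apply: eq_bigl => w; rewrite andbC.
Qed.

Lemma col_proper p q : is_search_tree e p -> is_search_tree e q -> is_rotation e p q ->
  fcol p != fcol q.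
Proof.
move=> sp [rq [qrq stq]] [u [v [pvu qE]]]; subst q.
have gp := search_good esym gc sp.
have qall : forall y, desc (rotate e p u v) rq y.
  by move=> y; have [H _] := st_sub esym (leqnn _) stq (in_setT y).
have huv : u != v := uv gp pvu.
have Heq : \sum_(w | (w != u) && (w != v)) hh (Nc e s (rotate e p u v) w) =
           \sum_(w | (w != u) && (w != v)) hh (Nc e s p w).
  apply: eq_bigr => w /andP [wu wv]; by rewrite /Nc (R1 pvu qrq qall wu wv).
apply/eqP => /(congr1 val) /=; rewrite /Ssum !(sum_split _ huv) Heq.
have := hh_lt (Nc e s p u); have := hh_lt (Nc e s p v).
have := hh_lt (Nc e s (rotate e p u v) u); have := hh_lt (Nc e s (rotate e p u v) v).
case: (main_cases esym eirr s_all s_thr gp pvu qrq qall) => [[E D]|[E D]];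
  have := differ_hh D; rewrite E; move/eqP; lia.
Qed.

End Final.

Section GenSt.
Variables (T : finType) (e : rel T).
Hypotheses (esym : symmetric e) (eirr : irreflexive e).

Lemma Sk_rem (L : seq T) (Z : {set T}) x0 k : uniq L -> k < size L ->
  (forall z, z \in Z -> z \notin L) ->
  ([set x in drop k L] :|: Z) :\ nth x0 L k = [set x in drop k.+1 L] :|: Z.
Proof.
move=> uL kL ZL.
have u' : uniq (drop k L) by rewrite drop_uniq.
rewrite (drop_nth x0 kL) /= in u'; case/andP: u' => nd _.
have nZ : nth x0 L k \notin Z by apply/negP => /ZL; rewrite mem_nth.
apply/setP => y; rewrite !inE (drop_nth x0 kL) inE.
case: (eqVneq y (nth x0 L k)) => [->|] //=.
by rewrite (negbTE nd) (negbTE nZ).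
Qed.

Lemma gen_st (p : {ffun T -> option T}) (L : seq T) (Z : {set T}) x0 :
  uniq L -> 0 < size L -> (forall z, z \in Z -> z \notin L) ->
  (forall k, k.+1 < size L -> p (nth x0 L k.+1) = Some (nth x0 L k)) ->
  (forall z, z \in Z -> p z = Some (last x0 L)) ->
  (forall z z', z \in Z -> z' \in Z -> ~~ e z z') ->
  (forall k, 0 < k < size L -> conn e ([set x in drop k L] :|: Z)) ->
  st e p ([set x in L] :|: Z) (nth x0 L 0).
Proof.
move=> uL L0 ZL pL pZ Zi hc.
suff H : forall m k, k + m = (size L).-1 -> st e p ([set x in drop k L] :|: Z) (nth x0 L k).
  by have := H (size L).-1 0 (add0n _); rewrite drop0.
elim=> [|m IH] k km.
  have kL : k < size L by lia.
  constructor; first by rewrite in_setU inE (drop_nth x0 kL) mem_head.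
  rewrite (Sk_rem x0 uL kL ZL).
  have -> : drop k.+1 L = [::] by apply: drop_oversize; lia.
  move=> C cC; have [/set0Pn [z zC] CS Cc _] := cC.
  have zZ : z \in Z by have := subsetP CS _ zC; rewrite !inE.
  have CE : forall y, y \in C -> y = z.
    move=> y yC; apply/eqP; rewrite eq_sym; apply/negP => /negP zy.
    have [t /and3P [_ tC zt]] := conn_step (Cc _ _ zC yC) zy.
    have tZ : t \in Z by have := subsetP CS _ tC; rewrite !inE.
    by have := Zi _ _ zZ tZ; rewrite zt.
  exists z; split => //.
    by rewrite (pZ _ zZ) -nth_last; congr (Some (nth _ _ _)); lia.
  constructor => // C' [/set0Pn [y yC'] C'S _ _].
  have := subsetP C'S _ yC'; rewrite in_setD1 => /andP [yz /CE yz']; by rewrite yz' eqxx in yz.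
have kL : k.+1 < size L by lia.
have kL' : k < size L by lia.
constructor; first by rewrite in_setU inE (drop_nth x0 kL') mem_head.
rewrite (Sk_rem x0 uL kL' ZL) => C cC.
have hc' := hc k.+1 (ltac:(lia)).
rewrite (comp_full hc' cC).
exists (nth x0 L k.+1); split.
- by rewrite in_setU inE (drop_nth x0 kL) mem_head.
- exact: pL.
- apply: IH; lia.
Qed.

Lemma conn_univ (S : {set T}) b : b \in S -> (forall y, y != b -> e b y) -> conn e S.
Proof.
move=> bS bu x y xS yS.
have Hb : forall z, z \in S -> connect (induced e S) b z.
  move=> z zS; case: (eqVneq z b) => [->|zb]; first exact: connect0.
  by apply: connect1; rewrite /induced /= bS zS bu.
apply: connect_trans (Hb _ yS).
by rewrite induced_sym //; apply: Hb.
Qed.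

Lemma conn_single (S : {set T}) r : (forall y, y \in S -> y = r) -> conn e S.
Proof. by move=> H x y xS yS; rewrite (H _ xS) (H _ yS); exact: connect0. Qed.

End GenSt.

Section Lower.
Variables (T : finType) (e : rel T).
Hypotheses (esym : symmetric e) (eirr : irreflexive e).
Variables a b c : T.
Hypotheses (nac : ~~ e a c) (hac : a != c) (bu : forall y, y != b -> e b y).

Lemma hab : a != b.
Proof. apply/eqP => E; have : c != b by rewrite -E eq_sym. by move=> /bu; rewrite -E (negbTE nac). Qed.
Lemma hcb : c != b.
Proof. apply/eqP => E; have : a != b by rewrite -E. by move=> /bu; rewrite -E esym (negbTE nac). Qed.
Let hba : b != a. Proof. by rewrite eq_sym hab. Qed.
Let hbc : b != c. Proof. by rewrite eq_sym hcb. Qed.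
Let hca : c != a. Proof. by rewrite eq_sym. Qed.

Definition Ol := [seq x <- enum T | x \notin [:: a; b; c]].
Definition cpar (L : seq T) : {ffun T -> option T} :=
  [ffun x => if index x L is k.+1 then Some (nth x L k) else None].
Definition tipO : option T := if size Ol is k.+1 then Some (nth a Ol k) else None.

Lemma memO x : (x \in Ol) = (x \notin [:: a; b; c]).
Proof. by rewrite mem_filter mem_enum andbT. Qed.

Lemma aO : a \notin Ol. Proof. by rewrite memO !inE eqxx. Qed.
Lemma bO : b \notin Ol. Proof. by rewrite memO !inE eqxx orbT. Qed.
Lemma cO : c \notin Ol. Proof. by rewrite memO !inE eqxx !orbT. Qed.

Lemma cp_O R x : x \in Ol -> cpar (Ol ++ R) x = cpar Ol x.
Proof.
move=> xO; rewrite !ffunE index_cat xO.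
have := index_mem x Ol; rewrite xO.
case E: (index x Ol) => [|k] // H; by rewrite nth_cat ltnW.
Qed.

Lemma cpO_in x y : cpar Ol x = Some y -> y \in Ol.
Proof.
rewrite ffunE; case E: (index x Ol) => [|k] // [<-]; apply: mem_nth.
have : index x Ol <= size Ol by exact: index_size.
rewrite E; lia.
Qed.

Lemma cp_R R x : x \notin Ol ->
  cpar (Ol ++ R) x = if index x R is j.+1 then Some (nth x R j) else tipO.
Proof.
move=> xO; rewrite ffunE index_cat (negbTE xO).
case: (index x R) => [|j].
  rewrite addn0 /tipO; case E: (size Ol) => [|k] //.
  by rewrite nth_cat E ltnSn (set_nth_default a) // E.
by rewrite addnS nth_cat ltnNge leq_addr /= addKn.
Qed.

Lemma tip_ne x : x \notin Ol -> tipO != Some x.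
Proof.
move=> xO; rewrite /tipO; case E: (size Ol) => [|k] //.
apply/eqP => -[H]; move: xO; rewrite -H mem_nth // E //.
Qed.

Lemma cpO_ne x y : y \notin Ol -> cpar Ol x != Some y.
Proof. by move=> yO; apply/eqP => /cpO_in; rewrite (negbTE yO). Qed.

Definition Tr1 := cpar (Ol ++ [:: a; b; c]).
Definition Tr2 := cpar (Ol ++ [:: a; c; b]).
Definition Tr3 := cpar (Ol ++ [:: c; a; b]).
Definition Tr4 := cpar (Ol ++ [:: c; b; a]).
Definition Tr0 : {ffun T -> option T} :=
  [ffun x => if (x == a) || (x == c) then Some b else cpar (Ol ++ [:: b]) x].

Lemma Tr0O x : x \in Ol -> Tr0 x = cpar Ol x.
Proof.
move=> xO; rewrite ffunE cp_O //.
have -> : (x == a) = false by apply/negbTE; apply: contraNneq aO => <-.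
have -> : (x == c) = false by apply/negbTE; apply: contraNneq cO => <-.
done.
Qed.

Lemma Tr0a : Tr0 a = Some b. Proof. by rewrite ffunE eqxx. Qed.
Lemma Tr0c : Tr0 c = Some b. Proof. by rewrite ffunE eqxx orbT. Qed.
Lemma Tr0b : Tr0 b = tipO.
Proof. by rewrite ffunE (negbTE hba) (negbTE hbc) /= cp_R ?bO //= eqxx. Qed.


Lemma mem_drop_le (L : seq T) k x : x \in L -> k <= index x L -> x \in drop k L.
Proof.
move=> xL kx; have := index_mem x L; rewrite xL => xs.
have -> : x = nth x (drop k L) (index x L - k) by rewrite nth_drop subnKC // nth_index.
by apply: mem_nth; rewrite size_drop; lia.
Qed.

Lemma cpar_nth (L : seq T) k x0 : uniq L -> k.+1 < size L ->
  cpar L (nth x0 L k.+1) = Some (nth x0 L k).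
Proof.
move=> uL kL; rewrite ffunE index_uniq //.
by rewrite (set_nth_default x0) //; lia.
Qed.

Lemma chain_search (L : seq T) : uniq L -> (forall x, x \in L) -> b \in L ->
  (size L).-2 <= index b L -> is_search_tree e (cpar L).
Proof.
move=> uL Lall bL ib.
have L0 : 0 < size L by case: L bL {uL Lall ib}.
have bs : index b L < size L by rewrite index_mem.
exists (nth b L 0); split; first by rewrite ffunE index_uniq.
have := @gen_st _ e (cpar L) L set0 b uL L0.
rewrite setU0; have -> : [set x in L] = [set: T] by apply/setP => x; rewrite !inE Lall.
apply.
- by move=> z; rewrite inE.
- by move=> k kL; apply: cpar_nth.
- by move=> z; rewrite inE.
- by move=> z z'; rewrite inE.
move=> k /andP [k0 kL]; rewrite setU0.
case: (leqP k (index b L)) => kb.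
  apply: (@conn_univ _ e esym _ b) => //; rewrite !inE ?orbF; exact: mem_drop_le.
apply: (@conn_single _ e _ (nth b L k)) => y; rewrite !inE ?orbF.
have -> : drop k L = [:: nth b L k].
  rewrite (drop_nth b kL); congr (_ :: _); apply: drop_oversize; lia.
by rewrite inE => /eqP.
Qed.

Lemma uniq_OR (R : seq T) : uniq R -> all (fun x => x \in [:: a; b; c]) R -> uniq (Ol ++ R).
Proof.
move=> uR aR; rewrite cat_uniq uR andbT filter_uniq ?enum_uniq //=.
apply/hasPn => x xR; rewrite memO negbK; exact: (allP aR).
Qed.

Lemma all_OR (R : seq T) : a \in R -> b \in R -> c \in R -> forall x, x \in Ol ++ R.
Proof.
move=> aR bR cR x; rewrite mem_cat memO !inE.
by case: (eqVneq x a) => [->|] //=; case: (eqVneq x b) => [->|] //=; case: (eqVneq x c) => [->|].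
Qed.

Ltac dist := rewrite /= ?inE ?eqxx ?(negbTE hab) ?(negbTE hba) ?(negbTE hac) ?(negbTE hca) ?(negbTE hbc) ?(negbTE hcb) ?orbT ?orbF //=.

Lemma Tr1_s : is_search_tree e Tr1.
Proof.
apply: chain_search.
- by apply: uniq_OR; dist.
- by apply: all_OR; dist.
- by rewrite mem_cat; dist.
- by rewrite size_cat index_cat (negbTE bO) /= (negbTE hab) eqxx; lia.
Qed.

Ltac chs := apply: chain_search; [by apply: uniq_OR; dist | by apply: all_OR; dist
  | by rewrite mem_cat; dist | by rewrite size_cat index_cat (negbTE bO); dist; lia].

Lemma Tr2_s : is_search_tree e Tr2. Proof. chs. Qed.
Lemma Tr3_s : is_search_tree e Tr3. Proof. chs. Qed.
Lemma Tr4_s : is_search_tree e Tr4. Proof. chs. Qed.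

Lemma xcases x : [\/ x = a, x = b, x = c | x \in Ol].
Proof.
case: (eqVneq x a) => [->|xa]; first by constructor 1.
case: (eqVneq x b) => [->|xb]; first by constructor 2.
case: (eqVneq x c) => [->|xc]; first by constructor 3.
by constructor 4; rewrite memO !inE (negbTE xa) (negbTE xb) (negbTE xc).
Qed.

Lemma Tr0L x : x \in Ol ++ [:: b] -> Tr0 x = cpar (Ol ++ [:: b]) x.
Proof.
rewrite mem_cat => xL; rewrite ffunE.
have -> : (x == a) = false.
  by apply/negbTE/eqP => E; move: xL; rewrite E (negbTE aO) !inE (negbTE hab).
have -> : (x == c) = false.
  by apply/negbTE/eqP => E; move: xL; rewrite E (negbTE cO) !inE (negbTE hcb).
done.
Qed.

Lemma Tr0_s : is_search_tree e Tr0.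
Proof.
set L := Ol ++ [:: b].
have uL : uniq L by apply: uniq_OR; dist.
have L0 : 0 < size L by rewrite size_cat addn1.
have n0L : nth b L 0 \in L by apply: mem_nth.
exists (nth b L 0); split; first by rewrite Tr0L // ffunE index_uniq.
have cov : [set x in L] :|: [set a; c] = [set: T].
  apply/setP => x; rewrite !inE mem_cat.
  by case: (xcases x) => [->|->|->|xO]; dist; rewrite ?xO.
rewrite -cov; apply: (@gen_st _ e Tr0 L [set a; c] b uL L0).
- move=> z; rewrite !inE mem_cat => /orP [] /eqP ->.
    by rewrite (negbTE aO) !inE (negbTE hab).
  by rewrite (negbTE cO) !inE (negbTE hcb).
- move=> k kL; rewrite Tr0L; first exact: cpar_nth.
  by apply: mem_nth.
- move=> z; rewrite !inE => /orP [] /eqP ->; rewrite ffunE eqxx ?orbT /L last_cat //.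
- move=> z z'; rewrite !inE => /orP [] /eqP -> /orP [] /eqP ->; by rewrite ?eirr // esym.
move=> k /andP [k0 kL]; apply: (@conn_univ _ e esym _ b) => //.
rewrite !inE; apply/orP; left; apply: mem_drop_le; first by rewrite mem_cat inE eqxx orbT.
by rewrite index_cat (negbTE bO) /= eqxx addn0; move: kL; rewrite size_cat addn1.
Qed.

Lemma SomeE (x y : T) : (Some x == Some y) = (x == y).
Proof. by []. Qed.

Lemma chO (R : seq T) x : x \in Ol -> cpar (Ol ++ R) x = cpar Ol x.
Proof. exact: cp_O. Qed.

Lemma neqO x y : x \in Ol -> y \notin Ol -> (x == y) = false.
Proof. by move=> xO yO; apply/negbTE/eqP => E; move: xO; rewrite E (negbTE yO). Qed.

Lemma ffun_cases (p q : {ffun T -> option T}) : p a = q a -> p b = q b -> p c = q c ->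
  (forall x, x \in Ol -> p x = q x) -> p = q.
Proof.
move=> Ha Hb Hc HO; apply/ffunP => x.
by case: (xcases x) => [->|->|->|xO] //; exact: HO.
Qed.

Lemma rotO (p : {ffun T -> option T}) u v x : x \in Ol -> u \notin Ol -> v \notin Ol ->
  (forall y, y \in Ol -> p y = cpar Ol y) -> rotate e p u v x = cpar Ol x.
Proof.
move=> xO uO vO Hp; rewrite /rotate ffunE (neqO xO vO) (neqO xO uO) (Hp _ xO).
by rewrite (negbTE (cpO_ne _ vO)).
Qed.

Lemma chOl (R : seq T) : forall y, y \in Ol -> cpar (Ol ++ R) y = cpar Ol y.
Proof. move=> y; exact: cp_O. Qed.

Lemma Tr0Ol : forall y, y \in Ol -> Tr0 y = cpar Ol y.
Proof. exact: Tr0O. Qed.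

Lemma Tr1a : Tr1 a = tipO.
Proof. by rewrite /Tr1 cp_R ?aO //; dist. Qed.
Lemma Tr1b : Tr1 b = Some a.
Proof. by rewrite /Tr1 cp_R ?bO //; dist. Qed.
Lemma Tr1c : Tr1 c = Some b.
Proof. by rewrite /Tr1 cp_R ?cO //; dist. Qed.
Lemma Tr2a : Tr2 a = tipO.
Proof. by rewrite /Tr2 cp_R ?aO //; dist. Qed.
Lemma Tr2c : Tr2 c = Some a.
Proof. by rewrite /Tr2 cp_R ?cO //; dist. Qed.
Lemma Tr2b : Tr2 b = Some c.
Proof. by rewrite /Tr2 cp_R ?bO //; dist. Qed.
Lemma Tr3c : Tr3 c = tipO.
Proof. by rewrite /Tr3 cp_R ?cO //; dist. Qed.
Lemma Tr3a : Tr3 a = Some c.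
Proof. by rewrite /Tr3 cp_R ?aO //; dist. Qed.
Lemma Tr3b : Tr3 b = Some a.
Proof. by rewrite /Tr3 cp_R ?bO //; dist. Qed.
Lemma Tr4c : Tr4 c = tipO.
Proof. by rewrite /Tr4 cp_R ?cO //; dist. Qed.
Lemma Tr4b : Tr4 b = Some c.
Proof. by rewrite /Tr4 cp_R ?bO //; dist. Qed.
Lemma Tr4a : Tr4 a = Some b.
Proof. by rewrite /Tr4 cp_R ?aO //; dist. Qed.

Lemma rot_val (p : {ffun T -> option T}) u v x : rotate e p u v x =
  if x == v then p u else if x == u then Some v else if p x == Some v then
  (if moved e p u x then Some u else Some v) else p x.
Proof. by rewrite ffunE. Qed.

Ltac vals := rewrite rot_val; dist; rewrite ?(negbTE (tip_ne aO)) ?(negbTE (tip_ne bO)) ?(negbTE (tip_ne cO)) ?(negbTE (cpO_ne _ aO)); dist; rewrite ?Tr0a ?Tr0b ?Tr0c ?Tr1a ?Tr1b ?Tr1c ?Tr2a ?Tr2b ?Tr2c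
  ?Tr3a ?Tr3b ?Tr3c ?Tr4a ?Tr4b ?Tr4c ?SomeE; dist;
  rewrite ?(negbTE (tip_ne aO)) ?(negbTE (tip_ne bO)) ?(negbTE (tip_ne cO)); dist.

Lemma rot1 : rotate e Tr0 b a = Tr1.
Proof.
apply: ffun_cases; [vals|vals|vals|].
move=> x xO; rewrite (rotO xO bO aO Tr0Ol) /Tr1 chOl //.
Qed.

Lemma rot2 : rotate e Tr1 b c = Tr2.
Proof.
apply: ffun_cases; [vals|vals|vals|].
move=> x xO; rewrite (rotO xO bO cO (chOl _)) /Tr2 chOl //.
Qed.

Lemma mv3 : moved e Tr3 c b.
Proof. by apply/existsP; exists b; rewrite desc_refl /= esym (bu hcb). Qed.

Lemma rot3 : rotate e Tr3 c a = Tr2.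
Proof.
apply: ffun_cases; [vals|vals; rewrite mv3 //|vals|].
move=> x xO; rewrite (rotO xO cO aO (chOl _)) /Tr2 chOl //.
Qed.

Lemma rot4 : rotate e Tr3 a b = Tr4.
Proof.
apply: ffun_cases; [vals|vals|vals|].
move=> x xO; rewrite (rotO xO aO bO (chOl _)) /Tr4 chOl //.
Qed.

Lemma rot5 : rotate e Tr0 b c = Tr4.
Proof.
apply: ffun_cases; [vals|vals|vals|].
move=> x xO; rewrite (rotO xO bO cO Tr0Ol) /Tr4 chOl //.
Qed.

Lemma ne_at (p q : {ffun T -> option T}) x : p x != q x -> p != q.
Proof. by apply: contraNneq => ->. Qed.

Lemma lower j : colorable (is_search_tree e) (rot_adj e) j -> 3 <= j.
Proof.
case=> f Hf.
have r01 : rot_adj e Tr0 Tr1.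
  split; first by apply: (@ne_at _ _ b); rewrite Tr0b Tr1b; exact: tip_ne aO.
  by left; exists b, a; rewrite Tr0a rot1.
have r12 : rot_adj e Tr1 Tr2.
  split; first by apply: (@ne_at _ _ b); rewrite Tr1b Tr2b SomeE hac.
  by left; exists b, c; rewrite Tr1c rot2.
have r23 : rot_adj e Tr2 Tr3.
  split; first by apply: (@ne_at _ _ a); rewrite Tr2a Tr3a; exact: tip_ne cO.
  by right; exists c, a; rewrite Tr3a rot3.
have r34 : rot_adj e Tr3 Tr4.
  split; first by apply: (@ne_at _ _ a); rewrite Tr3a Tr4a SomeE hcb.
  by left; exists a, b; rewrite Tr3b rot4.
have r40 : rot_adj e Tr4 Tr0.
  split; first by apply: (@ne_at _ _ c); rewrite Tr4c Tr0c; exact: tip_ne bO.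
  by right; exists b, c; rewrite Tr0c rot5.
have h1 := Hf _ _ Tr0_s Tr1_s r01; have h2 := Hf _ _ Tr1_s Tr2_s r12.
have h3 := Hf _ _ Tr2_s Tr3_s r23; have h4 := Hf _ _ Tr3_s Tr4_s r34.
have h5 := Hf _ _ Tr4_s Tr0_s r40.
have ne : forall x y, f x != f y -> nat_of_ord (f x) <> nat_of_ord (f y).
  by move=> x y /eqP H E; apply: H; apply: ord_inj.
move/ne: h1 => h1; move/ne: h2 => h2; move/ne: h3 => h3; move/ne: h4 => h4; move/ne: h5 => h5.
have l0 := ltn_ord (f Tr0); have l1 := ltn_ord (f Tr1); have l2 := ltn_ord (f Tr2).
have l3 := ltn_ord (f Tr3); have l4 := ltn_ord (f Tr4).
lia.
Qed.
End Lower.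

Unset Implicit Arguments.

Theorem corollary3p5 (T : finType) (e : rel T) :
  symmetric e -> irreflexive e ->
  graph_connected e -> threshold_graph e -> ~ complete_graph e ->
  rotation_graph_chi_is e 3.
Proof.
move=> esym eirr gc [s [_ s_all s_thr]] ncomp.
split.
  exists (fcol e s) => p q sp sq [_ [rpq|rqp]].
    exact: (col_proper esym eirr gc s_all s_thr sp sq rpq).
  by rewrite eq_sym; exact: (col_proper esym eirr gc s_all s_thr sq sp rqp).
case: (boolP [exists a, exists c, (a != c) && ~~ e a c]) => [|H]; last first.
  exfalso; apply: ncomp => x y xy; apply/negPn/negP => nxy.
  move/negP: H; apply; apply/existsP; exists x; apply/existsP; exists y.
  by rewrite xy nxy.
case/existsP=> a /existsP [c /andP [ac nac]].
case: (@arg_maxnP T a predT (key e s) isT) => b _ bmax.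
have cT : conn e [set: T].
  move=> x y _ _.
  have H : subrel e (connect (induced e [set: T])).
    by move=> u v uv; apply: connect1; rewrite /induced /= !in_setT uv.
  exact: (connect_sub H (gc x y)).
have bu : forall y, y != b -> e b y.
  move=> y yb; apply: (keyF1 esym eirr s_all s_thr cT (in_setT b)) => //.
  by move=> w _; apply: bmax.
move=> j; exact: (lower esym eirr nac ac bu).
Qed.
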